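(* Let $A$ be the Lie algebra of formal vector fields below and $H^*(A,SO(2))$ its cohomology relative to $J$. Then $H^0(A,SO(2))\cong\mathbb C$ with representative $1$; $H^2(A,SO(2))\cong\mathbb C$ with representative $\omega^{-1}\omega^1$; $H^3(A,SO(2))\cong\mathbb C$ with representative $(\omega^{-1}\omega^1-\bar\omega^{-1}\bar\omega^1)(\omega^0+\bar\omega^0)$; $H^5(A,SO(2))\cong\mathbb C$ with representative $\omega^1\omega^{-1}\bar\omega^1\bar\omega^{-1}(\omega^0+\bar\omega^0)$; and $H^k(A,SO(2))=0$ for all other $k$.
   Context: $A$ is the complex Lie algebra with basis $x^n\partial_x,\ \bar x^n\partial_{\bar x}$ ($n\ge0$) and brackets $[x^n\partial_x,x^m\partial_x]=(m-n)x^{n+m-1}\partial_x$, the complex conjugate relations for $\bar x^n\partial_{\bar x}$, and $[x^n\partial_x,\bar x^m\partial_{\bar x}]=0$. The cochain complex $C^*(A)$ is the exterior algebra on the dual basis $\{\omega^n,\bar\omega^n\}_{n\ge-1}$, $\omega^n(x^m\partial_x)=\delta^m_{n+1}$, $\omega^n(\bar x^m\partial_{\bar x})=0$, $\bar\omega^n(x^m\partial_x)=0$, $\bar\omega^n(\bar x^m\partial_{\bar x})=\delta^m_{n+1}$, with differential determined by $d\omega(U,V)=-\omega([U,V])$ on 1-cochains. Let $J=x\partial_x-\bar x\partial_{\bar x}$. $H^*(A,SO(2))$ is the cohomology of the subcomplex of basic cochains, i.e. those $\omega$ with $i_J\omega=0$ and $L_J\omega=(i_Jd+di_J)\omega=0$.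 *)

(* Defs.v *)
From HB Require Import structures.
From mathcomp Require Import all_boot all_order all_algebra.
From mathcomp Require Import reals complex.
Set Implicit Arguments. Unset Strict Implicit. Unset Printing Implicit Defensive.
Import Order.TTheory GRing.Theory Num.Theory.
Local Open Scope ring_scope.

(* Basis of A: (false, m) = x^m d/dx ,  (true, m) = xbar^m d/dxbar . *)
Definition basisA := (bool * nat)%type.

(* Dual basis: the generator omega^n (n >= -1) is the dual of (false, n+1),
   omegabar^n is the dual of (true, n+1); i.e. generators are also indexed
   by basisA, gen u evaluating to 1 on u and to 0 on the other basis vectors. *)
Definition om (n : int) : basisA := (false, absz (n + 1)%R).
Definition omb (n : int) : basisA := (true, absz (n + 1)%R).

Section Cochains.
Variable C : fieldType.

(* Bracket of two basis vectors: a scalar times a basis vector.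
   [x^n d, x^m d] = (m - n) x^(n+m-1) d ; conjugate likewise ; mixed = 0.
   (When n = m = 0 the coefficient is 0, so the basis vector is irrelevant.) *)
Definition brA (u v : basisA) : C * basisA :=
  if u.1 == v.1 then ((v.2)%:R - (u.2)%:R, (u.1, (u.2 + v.2).-1)) else (0, u).

(* A k-cochain is an alternating multilinear form on A; it is represented by
   its values on tuples (lists) of basis vectors. *)
Definition form := seq basisA -> C.

Definition del (j : nat) (s : seq basisA) := take j s ++ drop j.+1 s.

Definition alternating (w : form) :=
  (forall a x y b, w (a ++ x :: y :: b) = - w (a ++ y :: x :: b)) /\
  (forall s, ~~ uniq s -> w s = 0).

(* The form lies in the exterior algebra on the dual basis {omega^n, omegabar^n}:
   it only involves finitely many generators. *)
Definition fin_generated (w : form) :=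
  exists S : seq basisA, forall s, w s != 0 -> all (mem S) s.

Definition cochain (k : nat) (w : form) :=
  [/\ forall s, size s != k -> w s = 0, alternating w & fin_generated w].

(* Chevalley--Eilenberg differential (trivial coefficients):
   dw(U_0..U_k) = sum_{i<j} (-1)^(i+j) w([U_i,U_j], U_0..^U_i..^U_j..U_k);
   on 1-cochains dw(U,V) = - w([U,V]). *)
Definition dA (w : form) : form := fun s =>
  \sum_(j < size s) \sum_(i < j)
     (-1) ^+ (i + j) * (brA (nth (false, 0%N) s i) (nth (false, 0%N) s j)).1 *
     w ((brA (nth (false, 0%N) s i) (nth (false, 0%N) s j)).2 :: del i (del j s)).

(* J = x d/dx - xbar d/dxbar ; interior product and Lie derivative. *)
Definition iJ (w : form) : form := fun s => w ((false, 1%N) :: s) - w ((true, 1%N) :: s).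
Definition LJ (w : form) : form := fun s => iJ (dA w) s + dA (iJ w) s.

Definition basic (k : nat) (w : form) :=
  [/\ cochain k w, forall s, iJ w s = 0 & forall s, LJ w s = 0].

Definition closed (w : form) := forall s, dA w s = 0.

Definition exact (k : nat) (w : form) :=
  match k with
  | 0%N => forall s, w s = 0
  | k'.+1 => exists eta, basic k' eta /\ forall s, dA eta s = w s
  end.

Definition H_is_line_spanned_by (k : nat) (r : form) :=
  [/\ basic k r, closed r, ~ exact k r &
      forall w, basic k w -> closed w ->
        exists c : C, exact k (fun s => w s - c * r s)].

Definition H_vanishes (k : nat) :=
  forall w, basic k w -> closed w -> exact k w.

(* Wedge monomial  g_1 g_2 ... g_n  as a form:
   (a_1 ^ ... ^ a_n)(U_1..U_n) = det (a_i(U_j)), expanded along the first row. *)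
Fixpoint mono (gs : seq basisA) : form := fun s =>
  match gs with
  | [::] => (s == [::])%:R
  | g :: gs' => \sum_(j < size s) (-1) ^+ j * (g == nth (false, 0%N) s j)%:R *
                  mono gs' (del j s)
  end.

Definition addf (v w : form) : form := fun s => v s + w s.
Definition subf (v w : form) : form := fun s => v s - w s.

End Cochains.

Definition rep0 (C : fieldType) : form C := mono C [::].
Definition rep2 (C : fieldType) : form C := mono C [:: om (-1); om 1].
Definition rep3 (C : fieldType) : form C :=
  subf (addf (mono C [:: om (-1); om 1; om 0]) (mono C [:: om (-1); om 1; omb 0]))
       (addf (mono C [:: omb (-1); omb 1; om 0]) (mono C [:: omb (-1); omb 1; omb 0])).
Definition rep5 (C : fieldType) : form C :=
  addf (mono C [:: om 1; om (-1); omb 1; omb (-1); om 0])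
       (mono C [:: om 1; om (-1); omb 1; omb (-1); omb 0]).

(* Main.v *)
Require Import Defs.
From HB Require Import structures.
From mathcomp Require Import all_boot all_order all_algebra.
From mathcomp Require Import reals complex.
Require Import Defs.
From mathcomp Require Import ring lra.
From Stdlib Require Import FunctionalExtensionality.
Set Implicit Arguments. Unset Strict Implicit. Unset Printing Implicit Defensive.
Import Order.TTheory GRing.Theory Num.Theory.
Local Open Scope ring_scope.

Notation x0 := (false, 0%N).

Lemma del_cons0 (x : basisA) s : del 0 (x :: s) = s.
Proof. by rewrite /del /= drop0. Qed.
Lemma del_consS (x : basisA) j s : del j.+1 (x :: s) = x :: del j s.
Proof. by []. Qed.

Section Gen.
Variable C : numFieldType.
Implicit Types v w : form C.

Definition swapanti v := forall a x y b, v (a ++ x :: y :: b) = - v (a ++ y :: x :: b).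
Definition shift v (x : basisA) : form C := fun r => v (x :: r).

Lemma swapanti_shift v x : swapanti v -> swapanti (shift v x).
Proof. by move=> H a y z b; rewrite /shift -!cat_cons H. Qed.

Lemma swap0 v : swapanti v -> forall p q r, v (p :: q :: r) = - v (q :: p :: r).
Proof. by move=> H p q r; exact: (H [::]). Qed.

Definition T v (x : basisA) s : C := \sum_(j < size s)
  (-1) ^+ j.+1 * (brA C x (nth x0 s j)).1 * v ((brA C x (nth x0 s j)).2 :: del j s).

Lemma dA_cons v x s : (forall p q r, v (p :: q :: r) = - v (q :: p :: r)) ->
  dA v (x :: s) = T v x s - dA (shift v x) s.
Proof.
move=> Hs; rewrite /dA /T /= big_ord_recl /= big_ord0 add0r.
rewrite -sumrB; apply: eq_bigr => j _.
rewrite big_ord_recl /= -sumrN; congr (_ + _).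
  by rewrite /bump /= add0n del_cons0.
apply: eq_bigr => i _; rewrite /bump /= /shift.
rewrite !add1n !add0n !del_consS Hs addSn addnS !exprS.
by rewrite !mulN1r opprK mulrN.
Qed.


Lemma dA_nil v : dA v [::] = 0.
Proof. by rewrite /dA big_ord0. Qed.
Lemma T_nil v x : T v x [::] = 0.
Proof. by rewrite /T big_ord0. Qed.

Lemma T_cons v x y s : (forall p q r, v (p :: q :: r) = - v (q :: p :: r)) ->
  T v x (y :: s) = - ((brA C x y).1 * v ((brA C x y).2 :: s)) + T (shift v y) x s.
Proof.
move=> Hs; rewrite /T /= big_ord_recl /= del_cons0 expr1 mulN1r mulNr; congr (_ + _).
apply: eq_bigr => j _; rewrite /bump /= add1n del_consS Hs /shift !exprS.
by rewrite add0n !mulN1r opprK mulrN !mulNr.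
Qed.

Lemma dA_lin v1 v2 v3 a b : (forall s, v1 s = a * v2 s + b * v3 s) ->
  forall s, dA v1 s = a * dA v2 s + b * dA v3 s.
Proof.
move=> H s; rewrite /dA !mulr_sumr -big_split; apply: eq_bigr => j _.
rewrite !mulr_sumr -big_split; apply: eq_bigr => i _.
by rewrite H /=; ring.
Qed.

Lemma T_lin v1 v2 v3 a b x : (forall s, v1 s = a * v2 s + b * v3 s) ->
  forall s, T v1 x s = a * T v2 x s + b * T v3 x s.
Proof.
move=> H s; rewrite /T !mulr_sumr -big_split; apply: eq_bigr => j _.
by rewrite H /=; ring.
Qed.

Lemma dA_opp v1 v2 : (forall s, v1 s = - v2 s) -> forall s, dA v1 s = - dA v2 s.
Proof.
move=> H s; rewrite (@dA_lin v1 v2 v2 (-1) 0) ?mul0r ?addr0 ?mulN1r //.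
by move=> r; rewrite H mul0r addr0 mulN1r.
Qed.

Lemma T_opp v1 v2 x : (forall s, v1 s = - v2 s) -> forall s, T v1 x s = - T v2 x s.
Proof.
move=> H s; rewrite (@T_lin v1 v2 v2 (-1) 0) ?mul0r ?addr0 ?mulN1r //.
by move=> r; rewrite H mul0r addr0 mulN1r.
Qed.

Lemma brA_anti (F : basisA -> C) x y :
  (brA C y x).1 * F (brA C y x).2 = - ((brA C x y).1 * F (brA C x y).2).
Proof.
rewrite /brA eq_sym; case: eqP => [E|_] /=; last by rewrite !mul0r oppr0.
by rewrite E addnC -mulNr opprB.
Qed.

Lemma T_swapanti v z : swapanti v -> swapanti (T v z).
Proof.
move=> Hv a; elim: a v Hv => [|w a IH] v Hv x y b /=.
  have H0 := swap0 Hv; have Hx := swap0 (swapanti_shift x Hv).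
  have Hy := swap0 (swapanti_shift y Hv).
  rewrite !T_cons // (@T_opp (shift (shift v x) y) (shift (shift v y) x)); last first.
    by move=> r; rewrite /shift H0.
  rewrite /shift H0 [v [:: x, _ & _]]H0.
  by ring.
have H0 := swap0 Hv.
rewrite !T_cons // IH; last exact: swapanti_shift.
by rewrite -!cat_cons Hv mulrN opprD opprK.
Qed.

Lemma dA_swapanti v : swapanti v -> swapanti (dA v).
Proof.
move=> Hv a; elim: a v Hv => [|z a IH] v Hv x y b /=.
  have H0 := swap0 Hv; have Hx := swap0 (swapanti_shift x Hv).
  have Hy := swap0 (swapanti_shift y Hv).
  rewrite !dA_cons // !T_cons //.
  rewrite (@dA_opp (shift (shift v x) y) (shift (shift v y) x)); last first.
    by move=> r; rewrite /shift H0.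
  rewrite (brA_anti (fun u => v (u :: b))) /shift.
  by ring.
have H0 := swap0 Hv.
rewrite !dA_cons // IH; last exact: swapanti_shift.
by rewrite T_swapanti // opprD opprK.
Qed.

Definition U (g : basisA) v s : C :=
  \sum_(j < size s) (-1) ^+ j * (g == nth x0 s j)%:R * v (del j s).

Lemma U_cons g v x s : U g v (x :: s) = (g == x)%:R * v s - U g (shift v x) s.
Proof.
rewrite /U /= big_ord_recl /= del_cons0 expr0 mul1r -sumrN; congr (_ + _).
apply: eq_bigr => j _; rewrite /bump /= add1n del_consS /shift exprS.
by rewrite mulN1r !mulNr.
Qed.

Lemma U_lin g v1 v2 v3 a b : (forall s, v1 s = a * v2 s + b * v3 s) ->
  forall s, U g v1 s = a * U g v2 s + b * U g v3 s.
Proof.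
move=> H s; rewrite /U !mulr_sumr -big_split; apply: eq_bigr => j _.
by rewrite H /=; ring.
Qed.

Lemma U_swapanti g v : swapanti v -> swapanti (U g v).
Proof.
move=> Hv a; elim: a v Hv => [|z a IH] v Hv x y b /=.
  have H0 := swap0 Hv.
  rewrite !U_cons (@U_lin g (shift (shift v x) y) (shift (shift v y) x) (shift (shift v y) x) (-1) 0); last first.
    by move=> r; rewrite /shift H0 mul0r addr0 mulN1r.
  rewrite /shift mul0r addr0 mulN1r.
  by ring.
rewrite !U_cons IH; last exact: swapanti_shift.
by rewrite Hv mulrN opprD opprK.
Qed.

Lemma mono_swapanti gs : swapanti (mono C gs).
Proof.
elim: gs => [|g gs IH] a x y b /=.
  by case: a => [|? ?] /=; rewrite oppr0.
exact: (U_swapanti g IH).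
Qed.

End Gen.
Section Gen2.
Variable C : numFieldType.
Implicit Types v w : form C.

Lemma selfopp0 (u : C) : u = - u -> u = 0.
Proof.
move=> H; apply/eqP; have : u *+ 2 == 0 by rewrite mulr2n {1}H addNr.
by rewrite mulrn_eq0.
Qed.

Lemma move_left v a m x b : swapanti v ->
  v (a ++ m ++ x :: b) = (-1) ^+ size m * v (a ++ x :: m ++ b).
Proof.
move=> Hv; elim: m a => [|z m IH] a /=; first by rewrite expr0 mul1r.
rewrite -[a ++ z :: _]cat_rcons IH cat_rcons Hv exprS.
by rewrite mulN1r mulrN mulNr.
Qed.

Lemma swapanti_nonuniq v : swapanti v -> forall s, ~~ uniq s -> v s = 0.
Proof.
move=> Hv; suff H : forall a s, ~~ uniq s -> v (a ++ s) = 0 by move=> s /(H [::]).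
move=> a s; elim: s a => [|z s IH] a //=; rewrite negb_and negbK => /orP [] Hz.
  case/splitPr: Hz => m b.
  rewrite -[a ++ z :: _]cat_rcons move_left // cat_rcons.
  apply/eqP; rewrite mulf_eq0; apply/orP; right; apply/eqP.
  by apply: selfopp0; rewrite {1}Hv.
by rewrite -cat_rcons IH.
Qed.

Lemma swapanti_alt v : swapanti v -> alternating v.
Proof. by move=> Hv; split=> //; exact: swapanti_nonuniq. Qed.

Lemma perm_mid (m b : seq basisA) x : perm_eq (m ++ x :: b) (x :: m ++ b).
Proof. by rewrite -[x :: m ++ b]cat1s -[x :: b]cat1s perm_catCA. Qed.

Lemma perm_sign v s t : swapanti v -> perm_eq s t -> v s = v t \/ v s = - v t.
Proof.
elim: s v t => [|x s IH] v t Hv Hp.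
  by left; move: Hp; rewrite perm_sym => /perm_nilP ->.
have Ht : x \in t by rewrite -(perm_mem Hp) mem_head.
move: Hp; case/splitPr: Ht => m b Hp.
have Hp' : perm_eq s (m ++ b).
  rewrite -(perm_cons x); apply: perm_trans Hp _; exact: perm_mid.
rewrite -[m ++ x :: b]cat0s move_left //= .
have [E|E] := IH (shift v x) _ (swapanti_shift x Hv) Hp'; rewrite /shift in E;
  rewrite E; rewrite -signr_odd; case: (odd (size m)); rewrite /= ?expr1 ?expr0 ?mul1r ?mulN1r ?opprK;
  by [left | right].
Qed.

Lemma perm_zero v s t : swapanti v -> perm_eq s t -> v t = 0 -> v s = 0.
Proof. by move=> Hv Hp H0; case: (perm_sign Hv Hp); rewrite H0 ?oppr0. Qed.

Definition wtc (b : bool) (x : basisA) : C := if b == x.1 then (x.2)%:R - 1 else 0.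
Definition Pc b s : C := \sum_(x <- s) wtc b x.

Lemma Pc_cons b x s : Pc b (x :: s) = wtc b x + Pc b s.
Proof. by rewrite /Pc big_cons. Qed.

Lemma Pc_perm b s t : perm_eq s t -> Pc b s = Pc b t.
Proof. exact: perm_big. Qed.

Lemma T_ext v1 v2 x : (forall s, v1 s = v2 s) -> forall s, T v1 x s = T v2 x s.
Proof. by move=> H s; apply: eq_bigr => j _; rewrite H. Qed.
Lemma dA_ext v1 v2 : (forall s, v1 s = v2 s) -> forall s, dA v1 s = dA v2 s.
Proof. by move=> H s; apply: eq_bigr => j _; apply: eq_bigr => i _; rewrite H. Qed.

Lemma T_X b v : swapanti v -> forall s, T v (b, 1%N) s = - (Pc b s * v s).
Proof.
move=> Hv s; elim: s v Hv => [|[yb ym] s IH] v Hv.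
  by rewrite T_nil /Pc big_nil mul0r oppr0.
rewrite T_cons; last exact: swap0.
rewrite IH; last exact: swapanti_shift.
rewrite Pc_cons /shift /brA /wtc /=.
case: eqP => [<-|_] /=; last by rewrite !mul0r add0r oppr0 !add0r.
rewrite add0n; ring.
Qed.

Lemma cartan b v : swapanti v -> forall s,
  dA v ((b, 1%N) :: s) + dA (shift v (b, 1%N)) s = - (Pc b s * v s).
Proof.
move=> Hv s; rewrite dA_cons; last exact: swap0.
by rewrite subrK T_X.
Qed.

Lemma LJ_formula v : swapanti v -> forall s,
  LJ v s = - ((Pc false s - Pc true s) * v s).
Proof.
move=> Hv s; rewrite /LJ /iJ.
rewrite (@dA_lin _ (fun s0 => v ((false, 1%N) :: s0) - v ((true, 1%N) :: s0)) (shift v (false, 1%N)) (shift v (true, 1%N)) 1 (-1)); last first.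
  by move=> r /=; rewrite /shift mul1r mulN1r.
have H1 := cartan false Hv s; have H2 := cartan true Hv s.
rewrite mul1r mulN1r.
move: H1 H2; set A := dA v _; set B := dA v _; set X := dA _ s; set Y := dA _ s => H1 H2.
have -> : A = - (Pc false s * v s) - X by rewrite -H1 addrK.
have -> : B = - (Pc true s * v s) - Y by rewrite -H2 addrK.
ring.
Qed.

Lemma scale_swapanti b (g : C -> C) v : swapanti v -> swapanti (fun r => g (Pc b r) * v r).
Proof.
move=> Hv a x y c; rewrite Hv mulrN; congr (- (g _ * _)).
by rewrite /Pc !big_cat !big_cons /=; congr (_ + _); exact: addrCA.
Qed.

Lemma brA_wt b x y : (brA C x y).1 != 0 -> wtc b (brA C x y).2 = wtc b x + wtc b y.
Proof.
case: x y => [xb xm] [yb ym]; rewrite /brA /=.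
case: (xb =P yb) => [<-|_] /=; last by rewrite eqxx.
rewrite /wtc /=.
case: (b == xb); last by rewrite addr0.
move=> Hne; have Hpos : (0 < xm + ym)%N.
  by case: xm Hne => [|?] //; case: ym => //; rewrite subrr eqxx.
transitivity ((xm + ym)%:R - 1 - 1 : C); last by rewrite natrD; ring.
by case: (xm + ym)%N Hpos => [//|n _]; rewrite /= -addn1 natrD; ring.
Qed.

Lemma T_scale b (g : C -> C) v x : swapanti v -> forall s,
  T (fun r => g (Pc b r) * v r) x s = g (wtc b x + Pc b s) * T v x s.
Proof.
move=> Hv s; elim: s g v Hv => [|y s IH] g v Hv; first by rewrite !T_nil mulr0.
rewrite T_cons; last exact: swap0 (scale_swapanti b g Hv).
rewrite (@T_ext _ (fun r => (fun z => g (wtc b y + z)) (Pc b r) * shift v y r)); last first.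
  by move=> r; rewrite /shift Pc_cons.
rewrite (IH (fun z => g (wtc b y + z)) (shift v y)); last exact: swapanti_shift.
rewrite [in RHS]T_cons; last exact: swap0.
have -> : (brA C x y).1 * (g (Pc b ((brA C x y).2 :: s)) * v ((brA C x y).2 :: s)) =
   g (wtc b x + Pc b (y :: s)) * ((brA C x y).1 * v ((brA C x y).2 :: s)).
  have [->|Hne] := eqVneq (brA C x y).1 0; first by rewrite !mul0r mulr0.
  by rewrite Pc_cons brA_wt // Pc_cons addrA mulrCA.
by rewrite Pc_cons addrCA mulrDr mulrN.
Qed.

Lemma dA_scale b (g : C -> C) v : swapanti v -> forall s,
  dA (fun r => g (Pc b r) * v r) s = g (Pc b s) * dA v s.
Proof.
move=> Hv s; elim: s g v Hv => [|x s IH] g v Hv; first by rewrite !dA_nil mulr0.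
rewrite dA_cons; last exact: swap0 (scale_swapanti b g Hv).
rewrite (@dA_ext _ (fun r => (fun z => g (wtc b x + z)) (Pc b r) * shift v x r)); last first.
  by move=> r; rewrite /shift Pc_cons.
rewrite (IH (fun z => g (wtc b x + z)) (shift v x)); last exact: swapanti_shift.
rewrite T_scale // [in RHS]dA_cons; last exact: swap0.
by rewrite Pc_cons mulrBr.
Qed.

Lemma del_perm (s : seq basisA) j : (j < size s)%N -> perm_eq s (nth x0 s j :: del j s).
Proof.
move=> Hj; rewrite /del -[s in perm_eq s _](cat_take_drop j) (drop_nth x0 Hj).
by rewrite -[nth x0 s j :: _]/([:: nth x0 s j] ++ _) perm_catCA.
Qed.

Lemma mono_support gs s : mono C gs s != 0 -> perm_eq gs s.
Proof.
elim: gs s => [|g gs IH] s /=.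
  by case: s => //=; rewrite eqxx.
move=> Hne.
have : [exists j : 'I_(size s), (-1) ^+ j * (g == nth x0 s j)%:R * mono C gs (del j s) != 0].
  apply: contraR Hne => /existsPn H; rewrite big1 // => j _.
  by apply/eqP; move: (H j); rewrite negbK.
case/existsP => j; have [E|NE] := eqVneq g (nth x0 s j); last by rewrite mulr0 mul0r eqxx.
rewrite mulr1 mulf_eq0 negb_or => /andP [_ /IH Hp].
rewrite E perm_sym; apply: perm_trans (del_perm (ltn_ord j)) _; by rewrite perm_cons perm_sym.
Qed.

Lemma mono_size gs s : mono C gs s != 0 -> size s = size gs.
Proof. by move/mono_support/perm_size. Qed.

End Gen2.
From mathcomp Require Import zify.

Definition brAZ (u v : basisA) : int * basisA :=
  if u.1 == v.1 then ((v.2)%:Z - (u.2)%:Z, (u.1, (u.2 + v.2).-1)) else (0, u).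
Fixpoint sumZ (n : nat) (F : nat -> int) : int := if n is n'.+1 then sumZ n' F + F n' else 0.
Fixpoint monoZ (gs s : seq basisA) : int := if gs is g :: gs' then
  sumZ (size s) (fun j => (-1)^+j * ((g == nth x0 s j) : nat)%:Z * monoZ gs' (del j s))
  else ((s == [::]) : nat)%:Z.
Definition dAZ (f : seq basisA -> int) s : int := sumZ (size s) (fun j => sumZ j (fun i =>
  (-1)^+(i+j) * (brAZ (nth x0 s i) (nth x0 s j)).1 *
  f ((brAZ (nth x0 s i) (nth x0 s j)).2 :: del i (del j s)))).
Definition wz (b : bool) (x : basisA) : int := if b == x.1 then (x.2)%:Z - 1 else 0.
Definition Pn (b : bool) (s : seq basisA) : int := foldr (fun x acc => wz b x + acc) 0 s.

Definition A0 : basisA := (false, 0%N).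
Definition A1 : basisA := (false, 1%N).
Definition A2 : basisA := (false, 2%N).
Definition B0 : basisA := (true, 0%N).
Definition B1 : basisA := (true, 1%N).
Definition B2 : basisA := (true, 2%N).
Definition alph := [:: A0; A1; A2; B0; B1; B2].
Definition canon : seq (seq basisA) :=
  [seq h ++ hb | h <- [:: [::]; [:: A1]; [:: A0; A2]; [:: A0; A1; A2]],
                 hb <- [:: [::]; [:: B1]; [:: B0; B2]; [:: B0; B1; B2]]].

Lemma PnE b s : Pn b s = \sum_(x <- s) wz b x.
Proof. by elim: s => [|x s IH]; rewrite ?big_nil ?big_cons //= IH. Qed.

Lemma Pn_perm b s t : perm_eq s t -> Pn b s = Pn b t.
Proof. by rewrite !PnE; exact: perm_big. Qed.

Lemma Pn_ge0 b s : (b, 0%N) \notin s -> 0 <= Pn b s.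
Proof.
elim: s => [|[xb xm] s IH] //=; rewrite inE negb_or => /andP [Hx Hs].
have := IH Hs; rewrite /wz /=; case: eqP => [E|_]; last by rewrite add0r.
subst xb; case: xm Hx => [|m] Hx; first by rewrite eqxx in Hx.
move=> H; lia.
Qed.

Lemma Pn_gem1 b s : uniq s -> -1 <= Pn b s.
Proof.
elim: s => [|[xb xm] s IH] //= /andP [Hx Hs].
have := IH Hs; rewrite /wz /=; case: eqP => [E|_] H; last by rewrite add0r.
subst xb; case: xm Hx => [|m] Hx; last by lia.
have := Pn_ge0 Hx; lia.
Qed.

Lemma Pn_small b s x : uniq s -> Pn b s = 0 -> x \in s -> x.1 = b -> (x.2 <= 2)%N.
Proof.
move=> Hu H0 Hx Hb.
have Hp := perm_to_rem Hx.
have := Pn_gem1 b (rem_uniq x Hu); rewrite (Pn_perm b Hp) /= in H0.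
move: H0; rewrite /wz Hb eqxx; case: x Hx Hp Hb => [xb xm] /= _ _ _ H0 H1.
lia.
Qed.

Lemma in_alph s x : uniq s -> Pn false s = 0 -> Pn true s = 0 -> x \in s -> x \in alph.
Proof.
move=> Hu HP HQ Hx; case: x Hx => [xb xm] Hx.
have : (xm <= 2)%N by case: xb Hx => Hx; [apply: (Pn_small Hu HQ Hx) | apply: (Pn_small Hu HP Hx)].
by case: xb {Hx}; case: xm => [|[|[|m]]].
Qed.

Lemma canon_key (m : seq bool) : size m = 6%N ->
  (Pn false (mask m alph) == 0) ==> (Pn true (mask m alph) == 0) ==> (mask m alph \in canon).
Proof.
by case: m => [|b0 [|b1 [|b2 [|b3 [|b4 [|b5 [|? ?]]]]]]] //= _;
  case: b0; case: b1; case: b2; case: b3; case: b4; case: b5; vm_compute.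
Qed.

Lemma classify s : uniq s -> Pn false s = 0 -> Pn true s = 0 ->
  exists2 t, t \in canon & perm_eq s t.
Proof.
move=> Hu HP HQ; set t := [seq x <- alph | x \in s].
have Hp : perm_eq s t.
  apply: uniq_perm => //; first by rewrite filter_uniq.
  move=> x; rewrite mem_filter; apply/idP/andP => [Hx|[]//].
  by split=> //; apply: (in_alph Hu HP HQ).
exists t => //.
have := canon_key (m := [seq x \in s | x <- alph]) (erefl _).
rewrite -filter_mask -/t -(Pn_perm _ Hp) -(Pn_perm _ Hp) HP HQ eqxx /=.
by [].
Qed.

Section Gen3.
Variable C : numFieldType.
Implicit Types v w : form C.

Lemma sumZ_cast n (F : nat -> int) : \sum_(j < n) ((F j)%:~R : C) = (sumZ n F)%:~R.
Proof. elim: n => [|n IH]; first by rewrite big_ord0. by rewrite big_ord_recr /= IH intrD. Qed.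

Lemma brA_cast1 u y : (brA C u y).1 = ((brAZ u y).1)%:~R.
Proof. by rewrite /brA /brAZ; case: ifP => _ //=; rewrite intrB. Qed.
Lemma brA_cast2 u y : (brA C u y).2 = (brAZ u y).2.
Proof. by rewrite /brA /brAZ; case: ifP. Qed.

Lemma mono_cast gs s : mono C gs s = (monoZ gs s)%:~R.
Proof.
elim: gs s => [|g gs IH] s /=; first by case: (s == [::]).
rewrite -sumZ_cast; apply: eq_bigr => j _.
by rewrite IH !intrM intr_sign; case: (g == _).
Qed.

Lemma dA_cast (f : seq basisA -> int) v : (forall s, v s = (f s)%:~R) ->
  forall s, dA v s = (dAZ f s)%:~R.
Proof.
move=> H s; rewrite /dA /dAZ -sumZ_cast; apply: eq_bigr => j _.
rewrite -sumZ_cast; apply: eq_bigr => i _.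
by rewrite H !brA_cast2 brA_cast1 !intrM intr_sign.
Qed.

Lemma Pc_Pn b s : Pc C b s = (Pn b s)%:~R.
Proof.
elim: s => [|x s IH]; first by rewrite /Pc big_nil.
by rewrite Pc_cons IH /= intrD /wtc /wz; case: ifP => _; rewrite ?intrB.
Qed.

Lemma Pc_eq0 b s : (Pc C b s == 0) = (Pn b s == 0).
Proof. by rewrite Pc_Pn intr_eq0. Qed.

Lemma zero_from_canon k v : swapanti v ->
  (forall s, v s != 0 -> [/\ size s = k, Pn false s = 0 & Pn true s = 0]) ->
  (forall t, t \in canon -> size t = k -> v t = 0) -> forall s, v s = 0.
Proof.
move=> Hv Hsup Hc s; apply/eqP; apply/negPn/negP => Hne.
have [Hk HP HQ] := Hsup s Hne.
have Hu : uniq s by apply: contraR Hne => /(swapanti_nonuniq Hv) ->; rewrite eqxx.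
have [t Ht Hp] := classify Hu HP HQ.
by move/eqP: Hne; apply; apply: (perm_zero Hv Hp); apply: Hc => //; rewrite -(perm_size Hp).
Qed.

End Gen3.
Section Gen4.
Variable C : numFieldType.
Implicit Types v w : form C.

Definition supp k v := forall s, v s != 0 -> [/\ size s = k, Pn false s = 0 & Pn true s = 0].

Lemma supp_add k v1 v2 : supp k v1 -> supp k v2 -> supp k (fun s => v1 s + v2 s).
Proof.
move=> H1 H2 s Hs; have [E|NE] := eqVneq (v1 s) 0; last exact: H1.
by apply: H2; move: Hs; rewrite E add0r.
Qed.

Lemma supp_scale k (c : C) v : supp k v -> supp k (fun s => c * v s).
Proof. by move=> H s; rewrite mulf_eq0 negb_or => /andP [_ /H]. Qed.

Lemma swap_add v1 v2 : swapanti v1 -> swapanti v2 -> swapanti (fun s => v1 s + v2 s).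
Proof. by move=> H1 H2 a x y b; rewrite H1 H2 opprD. Qed.

Lemma swap_scale (c : C) v : swapanti v -> swapanti (fun s => c * v s).
Proof. by move=> H a x y b; rewrite H mulrN. Qed.

Lemma supp_mono gs : Pn false gs = 0 -> Pn true gs = 0 -> supp (size gs) (mono C gs).
Proof.
move=> HP HQ s /mono_support Hp; split; first by rewrite (perm_size Hp).
  by rewrite -(Pn_perm _ Hp).
by rewrite -(Pn_perm _ Hp).
Qed.

Lemma size_del (s : seq basisA) j : (j < size s)%N -> size (del j s) = (size s).-1.
Proof. by move=> Hj; rewrite /del size_cat size_take size_drop Hj; lia. Qed.

Lemma supp_dA k v : swapanti v -> supp k v -> supp k.+1 (dA v).
Proof.
move=> Hv Hs s Hne.
have Hsz : size s = k.+1.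
  apply/eqP; apply: contraR Hne => Hk; apply/eqP.
  apply: big1 => j _; apply: big1 => i _.
  have -> : v ((brA C (nth x0 s i) (nth x0 s j)).2 :: del i (del j s)) = 0; last by rewrite mulr0.
  apply/eqP; apply: contraR Hk => /Hs [H _ _]; move: H => /=.
  have Hj := ltn_ord j; have Hi := ltn_ord i.
  have Hsj : size (del j s) = (size s).-1 by rewrite size_del.
  rewrite size_del; last by rewrite Hsj; move: Hi Hj; clear; lia.
  by rewrite Hsj; move: Hi Hj; clear; lia.
have Ev : forall b, forall r, v r = (fun z => (z == 0)%:R) (Pc C b r) * v r.
  move=> b r; have [->|NE] := eqVneq (v r) 0; first by rewrite mulr0.
  have [_ HP HQ] := Hs r NE; rewrite /= Pc_eq0.
  by case: b; rewrite ?HP ?HQ eqxx mul1r.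
have HP : Pn false s = 0.
  move: Hne; rewrite (dA_ext (Ev false)) (dA_scale false (fun z : C => (z == 0)%:R) Hv) Pc_eq0.
  by have [//|NE] := eqVneq (Pn false s) 0; rewrite /= mul0r eqxx.
have HQ : Pn true s = 0.
  move: Hne; rewrite (dA_ext (Ev true)) (dA_scale true (fun z : C => (z == 0)%:R) Hv) Pc_eq0.
  by have [//|NE] := eqVneq (Pn true s) 0; rewrite /= mul0r eqxx.
by split.
Qed.

Lemma iJ_swap v : swapanti v -> swapanti (iJ v).
Proof. by move=> H a x y b; rewrite /iJ -!cat_cons (H ((false,1%N) :: a)) (H ((true,1%N) :: a)) opprD. Qed.

Lemma Pn_A1 b s : Pn b ((false, 1%N) :: s) = Pn b s.
Proof. by rewrite /= /wz; case: b => /=; rewrite ?subrr add0r. Qed.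
Lemma Pn_B1 b s : Pn b ((true, 1%N) :: s) = Pn b s.
Proof. by rewrite /= /wz; case: b => /=; rewrite ?subrr add0r. Qed.

Lemma supp_iJ k v : supp k.+1 v -> supp k (iJ v).
Proof.
move=> H s; rewrite /iJ.
have [E|NE] := eqVneq (v ((false,1%N) :: s)) 0.
  rewrite E sub0r oppr_eq0 => /H [Hk HP HQ]; rewrite !Pn_B1 in HP HQ; rewrite /= in Hk.
  by split=> //; move: Hk; clear; lia.
move=> _; have [Hk HP HQ] := H _ NE; rewrite !Pn_A1 in HP HQ; rewrite /= in Hk.
by split=> //; move: Hk; clear; lia.
Qed.

Definition proj0 v : form C := fun s => (Pc C false s == 0)%:R * v s.

Lemma basic_swap k v : basic k v -> swapanti v.
Proof. by case=> [[_ [H _] _] _ _]. Qed.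

Lemma basic_LJ k v s : basic k v -> (Pc C false s - Pc C true s) * v s = 0.
Proof.
move=> Hb; have := LJ_formula (basic_swap Hb) s.
by case: Hb => _ _ ->; move/eqP; rewrite eq_sym oppr_eq0 => /eqP.
Qed.

Lemma Pc_A1 b s : Pc C b ((false, 1%N) :: s) = Pc C b s.
Proof. by rewrite Pc_cons /wtc; case: b => /=; rewrite ?subrr add0r. Qed.
Lemma Pc_B1 b s : Pc C b ((true, 1%N) :: s) = Pc C b s.
Proof. by rewrite Pc_cons /wtc; case: b => /=; rewrite ?subrr add0r. Qed.

Lemma basic_of k v : swapanti v -> supp k v -> fin_generated v -> (forall s, iJ v s = 0) ->
  basic k v.
Proof.
move=> Hv Hs Hf Hi; split => //.
  split => //; last exact: swapanti_alt.
  by move=> s Hk; apply/eqP; apply: contraR Hk => /Hs [-> _ _]; rewrite eqxx.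
move=> s; rewrite LJ_formula //.
have [->|NE] := eqVneq (v s) 0; first by rewrite mulr0 oppr0.
have [_ HP HQ] := Hs s NE; rewrite !Pc_Pn HP HQ subrr mul0r oppr0 //.
Qed.

Lemma proj0_basic k v : basic k v -> basic k (proj0 v).
Proof.
move=> Hb; have Hv := basic_swap Hb; case: Hb => [[Hsz _ [S HS]] HiJ HLJ].
have Hp : swapanti (proj0 v) := scale_swapanti false (fun z => (z == 0)%:R) Hv.
split.
- split.
  + by move=> s /Hsz; rewrite /proj0 => ->; rewrite mulr0.
  + exact: swapanti_alt.
  + by exists S => s; rewrite /proj0 mulf_eq0 negb_or => /andP [_ /HS].
- by move=> s; rewrite /iJ /proj0 Pc_A1 Pc_B1 -mulrBr; move: (HiJ s); rewrite /iJ => ->; rewrite mulr0.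
- move=> s; rewrite LJ_formula // /proj0 mulrCA.
  have := basic_LJ s (And3 (And3 Hsz (swapanti_alt Hv) (ex_intro _ S HS)) HiJ HLJ).
  by move=> ->; rewrite mulr0 oppr0.
Qed.

Lemma proj0_supp k v : basic k v -> supp k (proj0 v).
Proof.
move=> Hb s; rewrite /proj0 mulf_eq0 negb_or => /andP [H1 Hne].
have E : Pc C false s = 0.
  by apply/eqP; move: H1; case: (Pc C false s == 0); rewrite //= eqxx.
have := basic_LJ s Hb; rewrite E sub0r mulNr.
move/eqP; rewrite oppr_eq0 mulf_eq0 (negbTE Hne) orbF => HQ.
case: Hb => [[Hsz _ _] _ _]; split.
- by apply/eqP; apply: contraR Hne => /Hsz ->; rewrite eqxx.
- by apply/eqP; rewrite -(Pc_eq0 C) E.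
- by apply/eqP; rewrite -(Pc_eq0 C).
Qed.

Lemma dA_proj0 v s : swapanti v -> dA (proj0 v) s = (Pc C false s == 0)%:R * dA v s.
Proof. move=> Hv; exact: (dA_scale false (fun z => (z == 0)%:R) Hv). Qed.

Lemma basic_add k v1 v2 : basic k v1 -> basic k v2 -> basic k (fun s => v1 s + v2 s).
Proof.
move=> H1 H2; have S1 := basic_swap H1; have S2 := basic_swap H2.
case: H1 => [[Z1 _ [L1 F1]] I1 J1]; case: H2 => [[Z2 _ [L2 F2]] I2 J2].
have Sw := swap_add S1 S2.
split.
- split.
  + by move=> s Hs; rewrite Z1 // Z2 // addr0.
  + exact: swapanti_alt.
  + exists (L1 ++ L2) => s Hs; apply/allP => x Hx; suff: x \in L1 ++ L2 by []; rewrite mem_cat.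
    have [E|NE] := eqVneq (v1 s) 0.
      by move: Hs; rewrite E add0r => /F2 /allP /(_ x Hx) H; apply/orP; right.
    by move/allP: (F1 s NE) => /(_ x Hx) H; apply/orP; left.
- move=> s; move: (I1 s) (I2 s); rewrite /iJ => E1 E2.
  by rewrite opprD addrACA E1 E2 addr0.
- move=> s; rewrite LJ_formula // mulrDr opprD.
  have := LJ_formula S1 s; have := LJ_formula S2 s.
  by rewrite J1 J2 => <- <-; rewrite addr0.
Qed.

Lemma basic_scale k (c : C) v : basic k v -> basic k (fun s => c * v s).
Proof.
move=> H1; have S1 := basic_swap H1.
case: H1 => [[Z1 _ [L1 F1]] I1 J1].
have Sw := swap_scale c S1.
split.
- split.
  + by move=> s Hs; rewrite Z1 // mulr0.
  + exact: swapanti_alt.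
  + by exists L1 => s; rewrite mulf_eq0 negb_or => /andP [_ /F1].
- by move=> s; rewrite /iJ -mulrBr; move: (I1 s); rewrite /iJ => ->; rewrite mulr0.
- move=> s; rewrite LJ_formula // mulrCA.
  have := LJ_formula S1 s; rewrite J1 => /esym/eqP; rewrite oppr_eq0 => /eqP ->.
  by rewrite mulr0 oppr0.
Qed.

End Gen4.
Section Gen5.
Variable C : numFieldType.
Implicit Types v w : form C.

Lemma w1_exact k v : basic k.+1 v -> closed v ->
  exists eta, basic k eta /\ forall s, dA eta s = v s - proj0 v s.
Proof.
move=> Hb Hc; have Hv := basic_swap Hb.
pose g := fun z : C => - z^-1.
pose u := fun r => g (Pc C false r) * v r.
have Hu : swapanti u := scale_swapanti false g Hv.
have Hdu : forall r, dA u r = 0.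
  by move=> r; rewrite (dA_scale false g Hv) Hc mulr0.
have Heta : swapanti (shift u (false, 1%N)) := swapanti_shift _ Hu.
exists (shift u (false, 1%N)); split; last first.
  move=> s; have := cartan false Hu s; rewrite Hdu add0r => ->.
  rewrite /u /g /proj0 mulNr mulrN opprK mulrA.
  have [E|NE] := eqVneq (Pc C false s) 0; first by rewrite E !mul0r /= mulr1n mul1r subrr.
  by rewrite mulfV // mul1r /= mulr0n mul0r subr0.
case: Hb => [[Hsz _ [S HS]] HiJ HLJ].
split.
- split.
  + by move=> s Hs; rewrite /shift /u Hsz ?mulr0.
  + exact: swapanti_alt.
  + exists S => s; rewrite /shift /u mulf_eq0 negb_or => /andP [_ /HS] /=.
    by case/andP.
- move=> s; rewrite /iJ /shift /u.
  rewrite (swapanti_nonuniq Hv (s := [:: (false, 1%N), (false, 1%N) & s])) ?mulr0 //.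
  move: (HiJ ((true, 1%N) :: s)); rewrite /iJ => /eqP; rewrite subr_eq0 => /eqP ->.
  by rewrite (swapanti_nonuniq Hv (s := [:: (true, 1%N), (true, 1%N) & s])) ?mulr0 ?subrr.
- move=> s; rewrite LJ_formula // /shift /u mulrCA.
  have := basic_LJ ((false, 1%N) :: s) (And3 (And3 Hsz (swapanti_alt Hv) (ex_intro _ S HS)) HiJ HLJ).
  by rewrite !Pc_A1 => ->; rewrite mulr0 oppr0.
Qed.

Lemma exact_of k w f eta0 : basic k.+1 w -> closed w -> basic k eta0 ->
  (forall s, f s = w s - proj0 w s + dA eta0 s) -> exact k.+1 f.
Proof.
move=> Hb Hc He Hf; have [eta1 [H1 D1]] := w1_exact Hb Hc.
exists (fun s => eta1 s + eta0 s); split; first exact: basic_add.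
move=> s; rewrite (@dA_lin _ _ eta1 eta0 1 1); last by move=> r; rewrite !mul1r.
by rewrite !mul1r D1 Hf.
Qed.

Definition combo (l : seq (C * seq basisA)) : form C :=
  fun s => \sum_(p <- l) p.1 * mono C p.2 s.

Lemma combo_eval l s : combo l s = \sum_(p <- l) p.1 * (monoZ p.2 s)%:~R.
Proof. by apply: eq_bigr => p _; rewrite mono_cast. Qed.

Lemma dA_combo l s : dA (combo l) s = \sum_(p <- l) p.1 * (dAZ (monoZ p.2) s)%:~R.
Proof.
elim: l s => [|p l IH] s.
  rewrite big_nil (@dA_lin _ _ (combo [::]) (combo [::]) 0 0) ?mul0r ?addr0 //.
  by move=> r; rewrite /combo big_nil mul0r addr0.
rewrite big_cons -IH (@dA_lin _ _ (mono C p.2) (combo l) p.1 1); last first.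
  by move=> r; rewrite /combo big_cons mul1r.
by rewrite mul1r (dA_cast (f := monoZ p.2)) //; exact: mono_cast.
Qed.

Lemma combo_swap l : swapanti (combo l).
Proof.
move=> a x y b; rewrite /combo -sumrN; apply: eq_bigr => p _.
by rewrite mono_swapanti mulrN.
Qed.

Lemma supp_combo k l : all (fun p => (size p.2 == k) && (Pn false p.2 == 0) && (Pn true p.2 == 0)) l ->
  supp k (combo l).
Proof.
elim: l => [|p l IH] /=.
  by move=> _ s; rewrite /combo big_nil eqxx.
case/andP => /andP [/andP [/eqP Hk /eqP HP] /eqP HQ] /IH Hl s.
rewrite /combo big_cons.
have Hm := supp_mono (C := C) HP HQ; rewrite Hk in Hm.
by have := supp_add (supp_scale (c := p.1) Hm) Hl; move/(_ s).
Qed.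

Lemma fin_of_supp k v : swapanti v -> supp k v -> fin_generated v.
Proof.
move=> Hv Hs; exists alph => s Hne; have [_ HP HQ] := Hs s Hne.
have Hu : uniq s by apply: contraR Hne => /(swapanti_nonuniq Hv) ->; rewrite eqxx.
by apply/allP => x Hx; apply: (in_alph Hu HP HQ Hx).
Qed.

Lemma basic_of2 k v : swapanti v -> supp k v ->
  (forall t, t \in canon -> size t = k.-1 -> iJ v t = 0) -> basic k v.
Proof.
move=> Hv Hs Hi; apply: basic_of => //; first exact: fin_of_supp Hs.
case: k Hs Hi => [|k] Hs Hi.
  move=> s; rewrite /iJ.
  have Z : forall x, v (x :: s) = 0.
    by move=> x; apply/eqP; apply/negPn/negP => /Hs [].
  by rewrite !Z subrr.
exact: (zero_from_canon (iJ_swap Hv) (supp_iJ Hs) Hi).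
Qed.

Lemma canon_k (P : seq basisA -> Prop) k :
  (forall t, t \in [seq t <- canon | size t == k] -> P t) ->
  forall t, t \in canon -> size t = k -> P t.
Proof. by move=> H t Ht Hs; apply: H; rewrite mem_filter Hs eqxx. Qed.

End Gen5.

Ltac evalZ := repeat match goal with
  | |- context [monoZ ?g ?s] => let L := fresh "L" in let H := fresh "HL" in
      remember (monoZ g s) as L eqn:H; vm_compute in H; subst L
  | |- context [dAZ ?f ?s] => let L := fresh "L" in let H := fresh "HL" in
      remember (dAZ f s) as L eqn:H; vm_compute in H; subst L
  end.

Definition ck k := [seq t <- canon | size t == k].
Lemma ck0 : ck 0 = [:: [::]]. Proof. by []. Qed.
Lemma ck1 : ck 1 = [:: [:: B1]; [:: A1]]. Proof. by []. Qed.
Lemma ck2 : ck 2 = [:: [:: B0; B2]; [:: A1; B1]; [:: A0; A2]]. Proof. by []. Qed.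
Lemma ck3 : ck 3 = [:: [:: B0; B1; B2]; [:: A1; B0; B2]; [:: A0; A2; B1]; [:: A0; A1; A2]].
Proof. by []. Qed.
Lemma ck4 : ck 4 = [:: [:: A1; B0; B1; B2]; [:: A0; A2; B0; B2]; [:: A0; A1; A2; B1]].
Proof. by []. Qed.
Lemma ck5 : ck 5 = [:: [:: A0; A2; B0; B1; B2]; [:: A0; A1; A2; B0; B2]].
Proof. by []. Qed.
Lemma ck6 : ck 6 = [:: [:: A0; A1; A2; B0; B1; B2]].
Proof. by []. Qed.
Lemma ck_big k : (6 < k)%N -> ck k = [::].
Proof.
move=> Hk; have H : all (fun t => size t <= 6)%N canon by [].
apply/eqP; rewrite -size_eq0 size_filter; apply/eqP.
rewrite (@eq_in_count _ _ pred0) ?count_pred0 // => t /(allP H) /= Ht.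
by apply/negbTE; rewrite neq_ltn; apply/orP; left; apply: leq_ltn_trans Hk.
Qed.

Section Gen6.
Variable C : numFieldType.
Implicit Types v w : form C.

Lemma eq_from_canon k v1 v2 : swapanti v1 -> swapanti v2 -> supp k v1 -> supp k v2 ->
  (forall t, t \in ck k -> v1 t = v2 t) -> forall s, v1 s = v2 s.
Proof.
move=> S1 S2 H1 H2 Hc s; apply/eqP; rewrite -subr_eq0; apply/eqP.
apply: (zero_from_canon (v := fun s => v1 s - v2 s) (k := k)).
- by move=> a x y b; rewrite S1 S2; ring.
- move=> r Hr; have [E|NE] := eqVneq (v1 r) 0; last exact: H1.
  by apply: H2; move: Hr; rewrite E sub0r oppr_eq0.
- by move=> t Ht Hs; rewrite Hc ?subrr // /ck mem_filter Hs eqxx.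
Qed.

Lemma mul2K (x : C) : x * 2 = 0 -> x = 0.
Proof. by move/eqP; rewrite mulf_eq0 pnatr_eq0 orbF => /eqP. Qed.

Lemma basic_zero k : basic k (combo (C := C) [::]).
Proof.
apply: basic_of2; [exact: combo_swap | exact: supp_combo |].
by move=> t _ _; rewrite /iJ /combo !big_nil subrr.
Qed.

Lemma proj0_closed v : basic 0 v -> True. Proof. by []. Qed.

Lemma Wfacts k w : basic k w -> closed w ->
  [/\ basic k (proj0 w), swapanti (proj0 w), supp k (proj0 w) & closed (proj0 w)].
Proof.
move=> Hb Hc; have HWb := proj0_basic Hb; split => //.
- exact: basic_swap HWb.
- exact: proj0_supp.
- by move=> s; rewrite dA_proj0 ?Hc ?mulr0 //; exact: basic_swap Hb.
Qed.

Lemma Hvan1 : H_vanishes C 1.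
Proof.
move=> w Hb Hc; have [HWb HWw HWs HWc] := Wfacts Hb Hc.
set W := proj0 w in HWb HWw HWs HWc *.
set b1 := W [:: B1]; set a1 := W [:: A1].
have E : forall s, W s = combo [:: (b1, [:: B1]); (a1, [:: A1])] s.
  apply: (eq_from_canon HWw (combo_swap _) HWs (supp_combo _)); first by [].
  rewrite ck1 => t; rewrite !inE => /orP [] /eqP ->; rewrite combo_eval !big_cons big_nil /=; evalZ;
   rewrite /b1 /a1; ring.
case: HWb => _ HiJ _.
move: (HiJ [::]); rewrite /iJ !E !combo_eval !big_cons !big_nil /=; evalZ => R1.
move: (HWc [:: B0; B2]); rewrite (dA_ext E) dA_combo !big_cons big_nil /=; evalZ => R2.
move: (HWc [:: A0; A2]); rewrite (dA_ext E) dA_combo !big_cons big_nil /=; evalZ => R3.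
have Hb1 : b1 = 0 by apply: mul2K; rewrite -oppr0 -R2; ring.
have Ha1 : a1 = 0 by apply: mul2K; rewrite -oppr0 -R3; ring.
apply: (exact_of Hb Hc (basic_zero 0)) => s.
by rewrite -/W E combo_eval !big_cons big_nil /= Hb1 Ha1 dA_combo big_nil; ring.
Qed.

End Gen6.
Opaque monoZ dAZ.
Section Degrees.
Variable C : numFieldType.
Implicit Types v w : form C.

Lemma canon_ck (P : seq basisA -> Prop) k :
  (forall t, t \in ck k -> P t) -> forall t, t \in canon -> size t = k -> P t.
Proof. exact: canon_k. Qed.

Lemma swap_zero : swapanti (fun _ : seq basisA => 0 : C).
Proof. by move=> *; rewrite oppr0. Qed.
Lemma supp_zero k : supp k (fun _ : seq basisA => 0 : C).
Proof. by move=> s; rewrite eqxx. Qed.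

Lemma dA_proj0_canon v t : swapanti v -> Pn false t = 0 -> dA (proj0 v) t = dA v t.
Proof. by move=> Hv HP; rewrite dA_proj0 // Pc_eq0 HP eqxx mul1r. Qed.

Lemma proj0_canon v t : Pn false t = 0 -> proj0 v t = v t.
Proof. by move=> HP; rewrite /proj0 Pc_eq0 HP eqxx mul1r. Qed.

Lemma Hvan6 : H_vanishes C 6.
Proof.
move=> w Hb Hc; have [HWb HWw HWs HWc] := Wfacts Hb Hc.
set W := proj0 w in HWb HWw HWs HWc *.
set x := W [:: A0; A1; A2; B0; B1; B2].
have E : forall s, W s = combo [:: (x, [:: A0; A1; A2; B0; B1; B2])] s.
  apply: (eq_from_canon HWw (combo_swap _) HWs (supp_combo _)); first by [].
  rewrite ck6 => t; rewrite !inE => /eqP ->; rewrite combo_eval !big_cons big_nil /=; evalZ;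
   rewrite /x; ring.
case: HWb => _ HiJ _.
move: (HiJ [:: A0; A2; B0; B1; B2]); rewrite /iJ !E !combo_eval !big_cons !big_nil /=; evalZ => R1.
have Hx : x = 0 by rewrite -oppr0 -R1; ring.
apply: (exact_of Hb Hc (basic_zero _ 5)) => s.
by rewrite -/W E combo_eval !big_cons big_nil /= Hx dA_combo big_nil; ring.
Qed.

Lemma Hvan_big k : (6 < k)%N -> H_vanishes C k.
Proof.
case: k => [//|k] Hk w Hb Hc; have [HWb HWw HWs HWc] := Wfacts Hb Hc.
have E : forall s, proj0 w s = combo [::] s.
  apply: (eq_from_canon HWw (combo_swap _) HWs (supp_combo _)); first by [].
  by rewrite ck_big.
apply: (exact_of Hb Hc (basic_zero _ k)) => s.
by rewrite E /combo big_nil dA_combo big_nil; ring.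
Qed.

Lemma Hvan4 : H_vanishes C 4.
Proof.
move=> w Hb Hc; have [HWb HWw HWs HWc] := Wfacts Hb Hc.
set W := proj0 w in HWb HWw HWs HWc *.
set x := W [:: A1; B0; B1; B2]; set y := W [:: A0; A2; B0; B2]; set z := W [:: A0; A1; A2; B1].
have E : forall s, W s = combo [:: (x, [:: A1; B0; B1; B2]); (y, [:: A0; A2; B0; B2]);
                                  (z, [:: A0; A1; A2; B1])] s.
  apply: (eq_from_canon HWw (combo_swap _) HWs (supp_combo _)); first by [].
  rewrite ck4 => t; rewrite !inE => /or3P [] /eqP ->; rewrite combo_eval !big_cons big_nil /=; evalZ;
   rewrite /x /y /z; ring.
case: HWb => _ HiJ _.
move: (HiJ [:: B0; B1; B2]); rewrite /iJ !E !combo_eval !big_cons !big_nil /=; evalZ => R1.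
move: (HiJ [:: A0; A2; B1]); rewrite /iJ !E !combo_eval !big_cons !big_nil /=; evalZ => R2.
have Hx : x = 0 by rewrite -R1; ring.
have Hz : z = 0 by rewrite -oppr0 -R2; ring.
pose eta0 := combo [:: (- (y / 2), [:: A0; A2; B1]); (y / 2, [:: A0; A1; A2])].
have Be : basic 3 eta0.
  apply: basic_of2; [exact: combo_swap | exact: supp_combo |].
  apply: canon_ck; rewrite ck2 => t; rewrite !inE => /or3P [] /eqP ->;
   rewrite /iJ /eta0 !combo_eval !big_cons !big_nil /=; evalZ; ring.
apply: (exact_of Hb Hc Be) => s.
rewrite -/W; suff -> : W s = dA eta0 s by ring.
rewrite /eta0.
apply: (eq_from_canon HWw (dA_swapanti (combo_swap _)) HWs (supp_dA (combo_swap _) (supp_combo _))) => //.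
rewrite ck4 => t; rewrite !inE => /or3P [] /eqP ->; rewrite E combo_eval dA_combo !big_cons !big_nil /=;
  evalZ; rewrite Hx Hz; by field.
Qed.

End Degrees.
Section Lines.
Variable C : numFieldType.
Implicit Types v w : form C.

Lemma eq_lin (L R X k : C) : L = R -> X = k * (L - R) -> X = 0.
Proof. by move=> -> ->; rewrite subrr mulr0. Qed.

Lemma line0 : H_is_line_spanned_by 0 (rep0 C).
Proof.
split.
- apply: basic_of2; [exact: mono_swapanti | exact: (supp_mono (gs := [::])) |].
  by move=> t _ _; rewrite /iJ /rep0 /= subrr.
- by move=> s; rewrite /dA; apply: big1 => j _; apply: big1 => i _; rewrite /rep0 /= mulr0n mulr0.
- by move/(_ [::]); rewrite /rep0 /= mulr1n => /eqP; rewrite oner_eq0.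
- move=> w [[Hsz _ _] _ _] _; exists (w [::]) => s.
  case: s => [|x s]; first by rewrite /rep0 /= mulr1n mulr1 subrr.
  by rewrite Hsz // /rep0 /= mulr0n mulr0 subrr.
Qed.

Lemma line2 : H_is_line_spanned_by 2 (rep2 C).
Proof.
have Er : rep2 C = combo [:: (1, [:: A0; A2])].
  by apply: functional_extensionality => s; rewrite /rep2 /combo big_cons big_nil mul1r addr0.
rewrite Er; split.
- apply: basic_of2; [exact: combo_swap | exact: supp_combo |].
  apply: canon_ck; rewrite ck1 => t; rewrite !inE => /orP [] /eqP ->;
   rewrite /iJ !combo_eval !big_cons !big_nil /=; evalZ; ring.
- move=> s; apply: (@eq_from_canon C 3 _ (fun _ => 0) (dA_swapanti (combo_swap _)) (@swap_zero C)
     (supp_dA (combo_swap _) (supp_combo _)) (@supp_zero C 3) _ s) => //.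
  rewrite ck3 => t; rewrite !inE => /or4P [] /eqP ->; rewrite dA_combo !big_cons !big_nil /=; evalZ; ring.
- case=> eta [Hb Hd].
  have HEb := proj0_basic Hb; have HEs := proj0_supp Hb; have HEw := basic_swap HEb.
  have D : forall t, Pn false t = 0 -> dA (proj0 eta) t = combo [:: (1, [:: A0; A2])] t.
    by move=> t Ht; rewrite dA_proj0_canon ?Hd //; exact: basic_swap Hb.
  set E := proj0 eta in HEb HEs HEw D.
  set b := E [:: B1]; set a := E [:: A1].
  have EE : forall s, E s = combo [:: (b, [:: B1]); (a, [:: A1])] s.
    apply: (eq_from_canon HEw (combo_swap _) HEs (supp_combo _)); first by [].
    rewrite ck1 => t; rewrite !inE => /orP [] /eqP ->; rewrite combo_eval !big_cons big_nil /=; evalZ;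
     rewrite /b /a; ring.
  case: HEb => _ HiJ _.
  move: (HiJ [::]); rewrite /iJ !EE !combo_eval !big_cons !big_nil /=; evalZ => R1.
  move: (D [:: A0; A2] erefl); rewrite (dA_ext EE) dA_combo combo_eval !big_cons !big_nil /=; evalZ => R2.
  move: (D [:: B0; B2] erefl); rewrite (dA_ext EE) dA_combo combo_eval !big_cons !big_nil /=; evalZ => R3.
  have Hb0 : b = 0 by apply: mul2K; apply: (eq_lin (k := -1) R3); ring.
  have Ha0 : a - b = 0 by apply: (eq_lin (k := 1) R1); ring.
  rewrite Hb0 subr0 in Ha0.
  have : (1 : C) = 0 by apply: (eq_lin (k := -1) R2); rewrite Ha0 Hb0; ring.
  by move/eqP; rewrite oner_eq0.
- move=> w Hb Hc; have [HWb HWw HWs HWc] := Wfacts Hb Hc.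
  set W := proj0 w in HWb HWw HWs HWc *.
  set g := W [:: B0; B2]; set d := W [:: A1; B1]; set a := W [:: A0; A2].
  have E : forall s, W s = combo [:: (g, [:: B0; B2]); (d, [:: A1; B1]); (a, [:: A0; A2])] s.
    apply: (eq_from_canon HWw (combo_swap _) HWs (supp_combo _)); first by [].
    rewrite ck2 => t; rewrite !inE => /or3P [] /eqP ->; rewrite combo_eval !big_cons big_nil /=; evalZ;
     rewrite /g /d /a; ring.
  case: HWb => _ HiJ _.
  move: (HiJ [:: B1]); rewrite /iJ !E !combo_eval !big_cons !big_nil /=; evalZ => R1.
  have Hd0 : d = 0 by apply: (eq_lin (k := 1) R1); ring.
  exists (a - g).
  pose eta0 := combo [:: (- (g / 2), [:: A1]); (- (g / 2), [:: B1])].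
  have Be : basic 1 eta0.
    apply: basic_of2; [exact: combo_swap | exact: supp_combo |].
    apply: canon_ck; rewrite ck0 => t; rewrite !inE => /eqP ->;
     rewrite /iJ /eta0 !combo_eval !big_cons !big_nil /=; evalZ; ring.
  apply: (exact_of Hb Hc Be) => s.
  rewrite -/W; suff -> : W s = (a - g) * combo [:: (1, [:: A0; A2])] s + dA eta0 s by ring.
  apply: (eq_from_canon HWw (swap_add (swap_scale _ (combo_swap _)) (dA_swapanti (combo_swap _))) HWs
      (supp_add (supp_scale (supp_combo _)) (supp_dA (combo_swap _) (supp_combo _)))) => //.
  rewrite ck2 => t; rewrite !inE => /or3P [] /eqP ->; rewrite /eta0 E !combo_eval dA_combo !big_cons !big_nil /=;
    evalZ; rewrite Hd0; by field.
Qed.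

End Lines.
Section Lines35.
Variable C : numFieldType.
Implicit Types v w : form C.

Definition r3l : seq (C * seq basisA) :=
  [:: (1, [:: A0; A2; A1]); (1, [:: A0; A2; B1]); (-1, [:: B0; B2; A1]); (-1, [:: B0; B2; B1])].

Lemma line3 : H_is_line_spanned_by 3 (rep3 C).
Proof.
have Er : rep3 C = combo r3l.
  apply: functional_extensionality => s; rewrite /rep3 /subf /addf /combo /r3l !big_cons big_nil /=.
  rewrite (_ : om (-1) = A0) // (_ : om 1 = A2) // (_ : om 0 = A1) //.
  rewrite (_ : omb (-1) = B0) // (_ : omb 1 = B2) // (_ : omb 0 = B1) //.
  ring.
rewrite Er; split.
- apply: basic_of2; [exact: combo_swap | exact: supp_combo |].
  apply: canon_ck; rewrite ck2 => t; rewrite !inE => /or3P [] /eqP ->;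
   rewrite /iJ !combo_eval !big_cons !big_nil /=; evalZ; ring.
- move=> s; apply: (@eq_from_canon C 4 _ (fun _ => 0) (dA_swapanti (combo_swap _)) (@swap_zero C)
     (supp_dA (combo_swap _) (supp_combo _)) (@supp_zero C 4) _ s) => //.
  rewrite ck4 => t; rewrite !inE => /or3P [] /eqP ->; rewrite dA_combo !big_cons !big_nil /=; evalZ; ring.
- case=> eta [Hb Hd].
  have HEb := proj0_basic Hb; have HEs := proj0_supp Hb; have HEw := basic_swap HEb.
  have D : forall t, Pn false t = 0 -> dA (proj0 eta) t = combo r3l t.
    by move=> t Ht; rewrite dA_proj0_canon ?Hd //; exact: basic_swap Hb.
  set E := proj0 eta in HEb HEs HEw D.
  set g := E [:: B0; B2]; set d := E [:: A1; B1]; set a := E [:: A0; A2].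
  have EE : forall s, E s = combo [:: (g, [:: B0; B2]); (d, [:: A1; B1]); (a, [:: A0; A2])] s.
    apply: (eq_from_canon HEw (combo_swap _) HEs (supp_combo _)); first by [].
    rewrite ck2 => t; rewrite !inE => /or3P [] /eqP ->; rewrite combo_eval !big_cons big_nil /=; evalZ;
     rewrite /g /d /a; ring.
  case: HEb => _ HiJ _.
  move: (HiJ [:: B1]); rewrite /iJ !EE !combo_eval !big_cons !big_nil /=; evalZ => R1.
  move: (D [:: A0; A2; B1] erefl); rewrite (dA_ext EE) dA_combo combo_eval /r3l !big_cons !big_nil /=; evalZ => R2.
  have Hd0 : d = 0 by apply: (eq_lin (k := 1) R1); ring.
  have : (1 : C) = 0 by apply: (eq_lin (k := -1) R2); rewrite Hd0; ring.
  by move/eqP; rewrite oner_eq0.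
- move=> w Hb Hc; have [HWb HWw HWs HWc] := Wfacts Hb Hc.
  set W := proj0 w in HWb HWw HWs HWc *.
  set p := W [:: B0; B1; B2]; set q := W [:: A1; B0; B2]; set r := W [:: A0; A2; B1].
  set t := W [:: A0; A1; A2].
  have E : forall s, W s = combo [:: (p, [:: B0; B1; B2]); (q, [:: A1; B0; B2]); (r, [:: A0; A2; B1]);
                                     (t, [:: A0; A1; A2])] s.
    apply: (eq_from_canon HWw (combo_swap _) HWs (supp_combo _)); first by [].
    rewrite ck3 => u; rewrite !inE => /or4P [] /eqP ->; rewrite combo_eval !big_cons big_nil /=; evalZ;
     rewrite /p /q /r /t; ring.
  case: HWb => _ HiJ _.
  move: (HiJ [:: B0; B2]); rewrite /iJ !E !combo_eval !big_cons !big_nil /=; evalZ => R1.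
  move: (HiJ [:: A0; A2]); rewrite /iJ !E !combo_eval !big_cons !big_nil /=; evalZ => R2.
  move: (HWc [:: A0; A2; B0; B2]); rewrite (dA_ext E) dA_combo !big_cons big_nil /=; evalZ => R3.
  have Hq : q + p = 0 by apply: (eq_lin (k := 1) R1); ring.
  have Hr : r + q = 0 by apply: mul2K; apply: (eq_lin (k := -1) R3); ring.
  have Ht : t + r = 0 by apply: (eq_lin (k := -1) R2); ring.
  have Hq' : q = - p by apply/eqP; rewrite -addr_eq0 Hq.
  have Hr' : r = - q by apply/eqP; rewrite -addr_eq0 Hr.
  have Ht' : t = - r by apply/eqP; rewrite -addr_eq0 Ht.
  exists p.
  apply: (exact_of Hb Hc (basic_zero _ 2)) => s.
  rewrite -/W; suff -> : W s = p * combo r3l s by rewrite dA_combo big_nil; ring.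
  apply: (eq_from_canon HWw (swap_scale _ (combo_swap _)) HWs (supp_scale (supp_combo _))) => //.
  rewrite ck3 => u; rewrite !inE => /or4P [] /eqP ->; rewrite /r3l E !combo_eval !big_cons !big_nil /=;
    evalZ.
  + ring.
  + by rewrite Hq'; ring.
  + by rewrite Hr' Hq'; ring.
  + by rewrite Ht' Hr' Hq'; ring.
Qed.

Definition r5l : seq (C * seq basisA) :=
  [:: (1, [:: A2; A0; B2; B0; A1]); (1, [:: A2; A0; B2; B0; B1])].

Lemma line5 : H_is_line_spanned_by 5 (rep5 C).
Proof.
have Er : rep5 C = combo r5l.
  apply: functional_extensionality => s; rewrite /rep5 /addf /combo /r5l !big_cons big_nil /=.
  rewrite (_ : om (-1) = A0) // (_ : om 1 = A2) // (_ : om 0 = A1) //.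
  rewrite (_ : omb (-1) = B0) // (_ : omb 1 = B2) // (_ : omb 0 = B1) //.
  ring.
rewrite Er; split.
- apply: basic_of2; [exact: combo_swap | exact: supp_combo |].
  apply: canon_ck; rewrite ck4 => t; rewrite !inE => /or3P [] /eqP ->;
   rewrite /iJ !combo_eval !big_cons !big_nil /=; evalZ; ring.
- move=> s; apply: (@eq_from_canon C 6 _ (fun _ => 0) (dA_swapanti (combo_swap _)) (@swap_zero C)
     (supp_dA (combo_swap _) (supp_combo _)) (@supp_zero C 6) _ s) => //.
  rewrite ck6 => t; rewrite !inE => /eqP ->; rewrite dA_combo !big_cons !big_nil /=; evalZ; ring.
- case=> eta [Hb Hd].
  have HEb := proj0_basic Hb; have HEs := proj0_supp Hb; have HEw := basic_swap HEb.
  have D : forall t, Pn false t = 0 -> dA (proj0 eta) t = combo r5l t.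
    by move=> t Ht; rewrite dA_proj0_canon ?Hd //; exact: basic_swap Hb.
  set E := proj0 eta in HEb HEs HEw D.
  set x := E [:: A1; B0; B1; B2]; set y := E [:: A0; A2; B0; B2]; set z := E [:: A0; A1; A2; B1].
  have EE : forall s, E s = combo [:: (x, [:: A1; B0; B1; B2]); (y, [:: A0; A2; B0; B2]);
                                    (z, [:: A0; A1; A2; B1])] s.
    apply: (eq_from_canon HEw (combo_swap _) HEs (supp_combo _)); first by [].
    rewrite ck4 => t; rewrite !inE => /or3P [] /eqP ->; rewrite combo_eval !big_cons big_nil /=; evalZ;
     rewrite /x /y /z; ring.
  case: HEb => _ HiJ _.
  move: (HiJ [:: B0; B1; B2]); rewrite /iJ !EE !combo_eval !big_cons !big_nil /=; evalZ => R1.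
  move: (D [:: A0; A2; B0; B1; B2] erefl); rewrite (dA_ext EE) dA_combo combo_eval /r5l !big_cons !big_nil /=;
    evalZ => R2.
  have Hx0 : x = 0 by apply: (eq_lin (k := 1) R1); ring.
  have : (1 : C) = 0 by apply: (eq_lin (k := 1) R2); rewrite Hx0; ring.
  by move/eqP; rewrite oner_eq0.
- move=> w Hb Hc; have [HWb HWw HWs HWc] := Wfacts Hb Hc.
  set W := proj0 w in HWb HWw HWs HWc *.
  set x := W [:: A0; A2; B0; B1; B2]; set y := W [:: A0; A1; A2; B0; B2].
  have E : forall s, W s = combo [:: (x, [:: A0; A2; B0; B1; B2]); (y, [:: A0; A1; A2; B0; B2])] s.
    apply: (eq_from_canon HWw (combo_swap _) HWs (supp_combo _)); first by [].
    rewrite ck5 => u; rewrite !inE => /orP [] /eqP ->; rewrite combo_eval !big_cons big_nil /=; evalZ;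
     rewrite /x /y; ring.
  case: HWb => _ HiJ _.
  move: (HiJ [:: A0; A2; B0; B2]); rewrite /iJ !E !combo_eval !big_cons !big_nil /=; evalZ => R1.
  have Hy : y - x = 0 by apply: (eq_lin (k := -1) R1); ring.
  have Hy' : y = x by apply/eqP; rewrite -subr_eq0 Hy.
  exists (- x).
  apply: (exact_of Hb Hc (basic_zero _ 4)) => s.
  rewrite -/W; suff -> : W s = - x * combo r5l s by rewrite dA_combo big_nil; ring.
  apply: (eq_from_canon HWw (swap_scale _ (combo_swap _)) HWs (supp_scale (supp_combo _))) => //.
  rewrite ck5 => u; rewrite !inE => /orP [] /eqP ->; rewrite /r5l E !combo_eval !big_cons !big_nil /=;
    evalZ.
  + ring.
  + by rewrite Hy'; ring.
Qed.

End Lines35.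

Theorem mainTheorem3 (R : realType) :
  [/\ H_is_line_spanned_by 0 (rep0 R[i]),
      H_is_line_spanned_by 2 (rep2 R[i]),
      H_is_line_spanned_by 3 (rep3 R[i]),
      H_is_line_spanned_by 5 (rep5 R[i]) &
      forall k : nat, k \notin [:: 0; 2; 3; 5]%N -> H_vanishes R[i] k].
Proof.
split; [exact: line0 | exact: line2 | exact: line3 | exact: line5 |].
move=> k; rewrite !inE.
case: k => [|[|[|[|[|[|[|k]]]]]]] //= _; [exact: Hvan1 | exact: Hvan4 | exact: Hvan6 |].
exact: Hvan_big.
Qed.
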